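(* Let $m\ge2$ and consider the single-family model. Let $q_m'$ be the probability that an individual of type $m$ is born at some time, but that eventually all individuals in the population have type $0$. If $N\mu^{1-2^{-(m-1)}}\to0$ as $N\to\infty$, then $q_m'\ll1/N$, i.e. $Nq_m'\to0$.
   Context: Single-family model: a population of $N$ individuals with types in $\{0,1,2,\dots\}$, with mutation rate $\mu=\mu(N)>0$. Initially one individual has type $1$ and the other $N-1$ have type $0$. Each individual independently lives for an exponentially distributed time with mean $1$, and is then replaced by a new individual whose parent is chosen uniformly at random from the $N$ individuals (including the one being replaced), inheriting the parent's type. Each individual of type $k\ge1$ experiences mutations at the times of a rate-$\mu$ Poisson process, each changing its type from $k$ to $k+1$; type $0$ individuals never mutate. Limits are as $N\to\infty$. *)

(* Defs.v *)
(* the single-family (Moran-type) model, encoded through its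
   uniformised embedded jump chain. *)
From Stdlib Require Import Reals List Arith Bool ClassicalEpsilon.
Open Scope R_scope.

(* A configuration of the population: the list of the N individuals' types. *)
Definition config := list nat.

Definition sumR (l : list R) : R := fold_right Rplus 0 l.

Definition set_at (s : config) (i : nat) (x : nat) : config :=
  firstn i s ++ x :: skipn (S i) s.

Definition all_zero (s : config) : bool := forallb (Nat.eqb 0) s.

Definition has_type (m : nat) (s : config) : bool := existsb (Nat.eqb m) s.

(* number of individuals of type >= 1 (those which mutate) *)
Definition n_mutating (s : config) : nat :=
  length (filter (fun k => negb (Nat.eqb k 0)) s).

(* total jump rate out of s (including "silent" jumps):
   N deaths (rate 1 each) + mu per individual of type >= 1 *)
Definition total_rate (N : nat) (mu : R) (s : config) : R :=
  INR N + mu * INR (n_mutating s).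

(* Transitions of the jump chain from s, as (probability, next configuration):
   - individual i dies (rate 1) and is replaced by a child of individual j,
     j uniform in {0..N-1} (including i): rate 1/N for each pair (i,j);
   - individual i of type k >= 1 mutates to type k+1: rate mu. *)
Definition transitions (N : nat) (mu : R) (s : config) : list (R * config) :=
  flat_map (fun i =>
     map (fun j => ((/ INR N) / total_rate N mu s, set_at s i (nth j s 0%nat)))
         (seq 0 N)) (seq 0 N)
  ++ map (fun i =>
        (if Nat.eqb (nth i s 0%nat) 0 then 0 else mu / total_rate N mu s,
         set_at s i (S (nth i s 0%nat)))) (seq 0 N).

(* p N mu m n s f = probability that, started from configuration s with
   flag f (f = "an individual of type m has already been born"), the chain
   has, within n jumps, reached the absorbing all-type-0 configuration with
   the flag set (i.e. a type-m individual was born along the way). *)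
Fixpoint p (N : nat) (mu : R) (m : nat) (n : nat) (s : config) (f : bool) : R :=
  match n with
  | O => if f && all_zero s then 1 else 0
  | S n' =>
      if all_zero s then (if f then 1 else 0)
      else sumR (map (fun ts => fst ts * p N mu m n' (snd ts) (f || has_type m (snd ts)))
                     (transitions N mu s))
  end.

Definition init_config (N : nat) : config := 1%nat :: repeat 0%nat (N - 1).

(* q'_m : probability that a type-m individual is born at some time but
   eventually all individuals have type 0 (limit of the nondecreasing
   finite-horizon probabilities). *)
Definition qprime (N : nat) (mu : R) (m : nat) : R :=
  epsilon (inhabits 0)
    (fun q => Un_cv (fun n => p N mu m n (init_config N) (has_type m (init_config N))) q).

(* Main.v *)
Require Import Defs.
From Stdlib Require Import Reals List Arith Bool ClassicalEpsilon Lra Lia Psatz.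
Open Scope R_scope.


Lemma sumR_app l1 l2 : sumR (l1 ++ l2) = sumR l1 + sumR l2.
Proof. induction l1; simpl; [ring| rewrite IHl1; ring]. Qed.

Lemma sumR_flat_map {A B} (f : B -> R) (g : A -> list B) l :
  sumR (map f (flat_map g l)) = sumR (map (fun x => sumR (map f (g x))) l).
Proof. induction l; simpl; auto. rewrite map_app, sumR_app, IHl; auto. Qed.

Lemma sumR_scal {A} (c : R) (f : A -> R) l :
  sumR (map (fun x => c * f x) l) = c * sumR (map f l).
Proof. induction l; simpl; [ring| rewrite IHl; ring]. Qed.

Lemma sumR_ext_in {A} (f g : A -> R) l :
  (forall x, In x l -> f x = g x) -> sumR (map f l) = sumR (map g l).
Proof. intros H; rewrite (map_ext_in f g l H); auto. Qed.

Lemma sumR_le_in {A} (f g : A -> R) l :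
  (forall x, In x l -> f x <= g x) -> sumR (map f l) <= sumR (map g l).
Proof. induction l; simpl; intros H; [lra|].
  pose proof (H a (or_introl eq_refl)). pose proof (IHl (fun x h => H x (or_intror h))). lra. Qed.

Lemma sumR_nonneg_in {A} (f : A -> R) l :
  (forall x, In x l -> 0 <= f x) -> 0 <= sumR (map f l).
Proof. induction l; simpl; intros H; [lra|].
  pose proof (H a (or_introl eq_refl)). pose proof (IHl (fun x h => H x (or_intror h))). lra. Qed.

Lemma map_nth_seq_shift {A} (g : nat -> A) (s : list nat) a :
  map (fun i => g (nth i (a :: s) 0%nat)) (seq 1 (length s)) =
  map (fun i => g (nth i s 0%nat)) (seq 0 (length s)).
Proof. rewrite <- seq_shift, map_map. reflexivity. Qed.

Lemma sum_seq_nth (g : nat -> R) (s : list nat) :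
  sumR (map (fun i => g (nth i s 0%nat)) (seq 0 (length s))) = sumR (map g s).
Proof. induction s; [reflexivity|].
  change (seq 0 (length (a :: s))) with (0%nat :: seq 1 (length s)).
  rewrite map_cons. rewrite map_nth_seq_shift. simpl sumR. rewrite IHs. reflexivity. Qed.

Definition prodR (l : list R) : R := fold_right Rmult 1 l.

Lemma set_at_cons_S a s i x : set_at (a :: s) (S i) x = a :: set_at s i x.
Proof. reflexivity. Qed.
Lemma set_at_cons_0 a s x : set_at (a :: s) 0 x = x :: s.
Proof. reflexivity. Qed.

Lemma set_at_length s i x : (i < length s)%nat -> length (set_at s i x) = length s.
Proof. revert i; induction s; intros i Hi; simpl in *; [lia|].
  destruct i; [reflexivity|]. rewrite set_at_cons_S; simpl. rewrite IHs; auto; lia. Qed.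

Lemma sum_set_at (g : nat -> R) s i x : (i < length s)%nat ->
  sumR (map g (set_at s i x)) = sumR (map g s) - g (nth i s 0%nat) + g x.
Proof. revert i; induction s; intros i Hi; simpl in *; [lia|].
  destruct i.
  - rewrite set_at_cons_0; simpl. ring.
  - rewrite set_at_cons_S; simpl. rewrite IHs by lia. ring. Qed.

Lemma prod_set_at (g : nat -> R) s i x : (i < length s)%nat ->
  prodR (map g (set_at s i x)) * g (nth i s 0%nat) = prodR (map g s) * g x.
Proof. revert i; induction s; intros i Hi; simpl in *; [lia|].
  destruct i.
  - rewrite set_at_cons_0; simpl. ring.
  - rewrite set_at_cons_S; simpl.
    assert (H := IHs i ltac:(lia)). 
    transitivity (g a * (prodR (map g (set_at s i x)) * g (nth i s 0%nat))); [ring|].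
    rewrite H; ring. Qed.

Definition E (N : nat) (mu : R) (s : config) (G : config -> R) : R :=
  sumR (map (fun ts => fst ts * G (snd ts)) (transitions N mu s)).

Definition zf (t : nat) : R := if Nat.eqb t 0 then 1 else 0.

Lemma E_expand N mu s G :
  E N mu s G =
  (/ INR N / total_rate N mu s) *
     sumR (map (fun i => sumR (map (fun j => G (set_at s i (nth j s 0%nat))) (seq 0 N))) (seq 0 N))
  + (mu / total_rate N mu s) *
     sumR (map (fun i => (1 - zf (nth i s 0%nat)) * G (set_at s i (S (nth i s 0%nat)))) (seq 0 N)).
Proof.
  unfold E, transitions. rewrite map_app, sumR_app, sumR_flat_map.
  f_equal.
  - rewrite <- sumR_scal. apply sumR_ext_in; intros i _.
    rewrite map_map; simpl. rewrite <- sumR_scal. reflexivity.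
  - rewrite map_map, <- sumR_scal. apply sumR_ext_in; intros i _. simpl.
    unfold zf. destruct (Nat.eqb (nth i s 0%nat) 0); ring.
Qed.


Lemma sumR_plus {A} (f g : A -> R) l :
  sumR (map (fun x => f x + g x) l) = sumR (map f l) + sumR (map g l).
Proof. induction l; simpl; [ring| rewrite IHl; ring]. Qed.

Lemma sumR_minus {A} (f g : A -> R) l :
  sumR (map (fun x => f x - g x) l) = sumR (map f l) - sumR (map g l).
Proof. induction l; simpl; [ring| rewrite IHl; ring]. Qed.

Lemma sumR_const {A} (c : R) (l : list A) :
  sumR (map (fun _ => c) l) = c * INR (length l).
Proof. induction l; [simpl; ring|]. cbn [length map]. rewrite S_INR. unfold sumR in *; cbn [fold_right]. rewrite IHl; ring. Qed.

Definition Zc (s : config) : R := sumR (map zf s).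

Lemma zf_01 t : zf t = 0 \/ zf t = 1.
Proof. unfold zf; destruct (Nat.eqb t 0); auto. Qed.

Lemma zf_S t : zf (S t) = 0.
Proof. reflexivity. Qed.

Lemma n_mutating_eq s : INR (n_mutating s) = INR (length s) - Zc s.
Proof. unfold n_mutating, Zc. induction s; [simpl; ring|].
  cbn [filter map]. unfold zf at 1. destruct (Nat.eqb a 0) eqn:E; cbn [negb length sumR fold_right].
  - rewrite S_INR. unfold sumR in *. rewrite IHs. ring.
  - rewrite !S_INR. unfold sumR in *. rewrite IHs. ring. Qed.

Lemma Zc_set_at s i x : (i < length s)%nat ->
  Zc (set_at s i x) = Zc s - zf (nth i s 0%nat) + zf x.
Proof. intros; unfold Zc; apply sum_set_at; auto. Qed.

Lemma Zc_bounds s : 0 <= Zc s <= INR (length s).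
Proof. unfold Zc; induction s; [simpl; lra|]. cbn [length map]. rewrite S_INR. unfold sumR in *; cbn [fold_right]. destruct (zf_01 a) as [H|H]; rewrite H;
  pose proof (pos_INR (length s)); lra. Qed.

Lemma rate_pos N mu s : (1 <= N)%nat -> 0 <= mu -> length s = N -> 0 < total_rate N mu s.
Proof. intros HN Hmu Hl. unfold total_rate. rewrite n_mutating_eq.
  pose proof (Zc_bounds s). rewrite Hl in *. apply le_INR in HN. simpl in HN.
  assert (0 <= mu * (INR N - Zc s)) by (apply Rmult_le_pos; lra). lra. Qed.

Lemma sum_seq_const N c : sumR (map (fun _ : nat => c) (seq 0 N)) = c * INR N.
Proof. rewrite sumR_const, length_seq. reflexivity. Qed.

Lemma E_one N mu s : (1 <= N)%nat -> 0 <= mu -> length s = N -> E N mu s (fun _ => 1) = 1.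
Proof. intros HN Hmu Hl. pose proof (rate_pos N mu s HN Hmu Hl) as HR.
  rewrite E_expand.
  rewrite (sumR_ext_in _ (fun _ => 1 * INR N)) by (intros; apply sum_seq_const).
  rewrite sum_seq_const.
  rewrite (sumR_ext_in _ (fun i => (fun t => 1 - zf t) (nth i s 0%nat))) by (intros; simpl; ring).
  subst N. rewrite (sum_seq_nth (fun t => 1 - zf t)). rewrite sumR_minus, sumR_const. fold (Zc s).
  assert (0 < INR (length s)) by (apply lt_0_INR; lia).
  unfold total_rate in *. rewrite n_mutating_eq in *. field. lra. Qed.

Lemma E_Zc N mu s : (1 <= N)%nat -> 0 <= mu -> length s = N -> E N mu s Zc = Zc s.
Proof. intros HN Hmu Hl. pose proof (rate_pos N mu s HN Hmu Hl) as HR.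
  rewrite E_expand. subst N.
  unfold total_rate in *. rewrite n_mutating_eq in *.
  assert (0 < INR (length s)) by (apply lt_0_INR; lia).
  pose proof (eq_refl (Zc s)) as HZ. unfold Zc at 2 in HZ.
  set (Z := Zc s) in *.
  rewrite (sumR_ext_in _ (fun i => (fun t => INR (length s) * (Z - zf t) + Z) (nth i s 0%nat)) (seq 0 (length s))).
  2:{ intros i Hi. apply in_seq in Hi.
      rewrite (sumR_ext_in _ (fun j => (fun t => (Z - zf (nth i s 0%nat)) + zf t) (nth j s 0%nat))).
      2:{ intros j _. unfold Z. rewrite Zc_set_at by lia. ring. }
      rewrite (sum_seq_nth (fun t => (Z - zf (nth i s 0%nat)) + zf t)), sumR_plus, sumR_const. rewrite HZ. ring. }
  rewrite (sum_seq_nth (fun t => INR (length s) * (Z - zf t) + Z)).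
  rewrite (sumR_ext_in _ (fun i => (fun t => (1 - zf t) * Z) (nth i s 0%nat)) (seq 0 (length s))).
  2:{ intros i Hi. apply in_seq in Hi. unfold Z. rewrite Zc_set_at by lia. rewrite zf_S.
      destruct (zf_01 (nth i s 0%nat)) as [H0|H0]; rewrite H0; ring. }
  rewrite (sum_seq_nth (fun t => (1 - zf t) * Z)).
  rewrite sumR_plus, sumR_const, (sumR_ext_in (fun t => INR (length s) * (Z - zf t)) (fun t => INR (length s) * Z + INR (length s) * (-1) * zf t))
    by (intros; ring).
  rewrite sumR_plus, sumR_const, sumR_scal.
  rewrite (sumR_ext_in (fun t => (1 - zf t) * Z) (fun t => Z + (- Z) * zf t)) by (intros; ring).
  rewrite sumR_plus, sumR_const, sumR_scal. rewrite <- HZ.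
  field. lra. Qed.


Lemma prod_set_at_div (g : nat -> R) s i x : (i < length s)%nat -> g (nth i s 0%nat) <> 0 ->
  prodR (map g (set_at s i x)) = prodR (map g s) * g x / g (nth i s 0%nat).
Proof. intros Hi Hg. pose proof (prod_set_at g s i x Hi). field_simplify_eq; auto.
  Qed.

Lemma zf_g (g : nat -> R) t : g 0%nat = 1 -> zf t * g t = zf t.
Proof. intros H. unfold zf. destruct t; simpl; [rewrite H|]; ring. Qed.

Lemma zf_ginv (g : nat -> R) t : g 0%nat = 1 -> zf t * / g t = zf t.
Proof. intros H. unfold zf. destruct t; simpl; [rewrite H, Rinv_1|]; ring. Qed.

Lemma E_ZF N mu s (g : nat -> R) : (1 <= N)%nat -> 0 <= mu -> length s = N ->
  g 0%nat = 1 -> (forall t, In t s -> 0 < g t) ->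
  E N mu s (fun x => Zc x * prodR (map g x)) =
  (/ INR N / total_rate N mu s) * (prodR (map g s) * Zc s *
      (sumR (map g s) * sumR (map (fun t => / g t) s) + sumR (map (fun t => / g t) s) - sumR (map g s)))
  + (mu / total_rate N mu s) * (Zc s * prodR (map g s) *
      sumR (map (fun t => (1 - zf t) * (g (S t) / g t)) s)).
Proof. intros HN Hmu Hl Hg0 Hgp.
  rewrite E_expand. subst N.
  pose proof (eq_refl (Zc s)) as HZ. unfold Zc at 2 in HZ.
  set (Z := Zc s) in *. set (F := prodR (map g s)).
  set (A := sumR (map g s)). set (B := sumR (map (fun t => / g t) s)).
  assert (Hgi : forall i, (i < length s)%nat -> 0 < g (nth i s 0%nat)).
  { intros i Hi. apply Hgp. apply nth_In; auto. }
  f_equal; f_equal.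
  - rewrite (sumR_ext_in _ (fun i => (fun t => F * (Z * A + Z) * / g t - F * A * zf t) (nth i s 0%nat)) (seq 0 (length s))).
    2:{ intros i Hi. apply in_seq in Hi. specialize (Hgi i ltac:(lia)).
      rewrite (sumR_ext_in _ (fun j => (fun t => (F / g (nth i s 0%nat)) * ((Z - zf (nth i s 0%nat)) * g t + zf t)) (nth j s 0%nat))).
      2:{ intros j _. unfold Z. rewrite Zc_set_at by lia. rewrite prod_set_at_div by (first [lia | apply Rgt_not_eq; exact Hgi]).
          fold F. rewrite <- (zf_g g (nth j s 0%nat)) at 2 by auto. field. lra. }
      rewrite (sum_seq_nth (fun t => (F / g (nth i s 0%nat)) * ((Z - zf (nth i s 0%nat)) * g t + zf t))).
      rewrite sumR_scal, sumR_plus, sumR_scal, <- HZ. fold A.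
      rewrite <- (zf_ginv g (nth i s 0%nat)) at 2 by auto. field. lra. }
    rewrite (sum_seq_nth (fun t => F * (Z * A + Z) * / g t - F * A * zf t)).
    rewrite sumR_minus, !sumR_scal, <- HZ. fold B. ring.
  - rewrite (sumR_ext_in _ (fun i => (fun t => Z * F * ((1 - zf t) * (g (S t) / g t))) (nth i s 0%nat)) (seq 0 (length s))).
    2:{ intros i Hi. apply in_seq in Hi. specialize (Hgi i ltac:(lia)).
        unfold Z. rewrite Zc_set_at by lia. rewrite prod_set_at_div by (first [lia | apply Rgt_not_eq; exact Hgi]). fold F. rewrite zf_S.
        destruct (zf_01 (nth i s 0%nat)) as [H0|H0]; rewrite H0; field; lra. }
    rewrite (sum_seq_nth (fun t => Z * F * ((1 - zf t) * (g (S t) / g t)))).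
    rewrite sumR_scal. ring.
Qed.


Lemma CS_list (g : nat -> R) l : (forall t, In t l -> 0 < g t) ->
  (sumR (map (fun t => 1 - zf t) l)) ^ 2 <=
  sumR (map (fun t => (1 - zf t) * g t) l) * sumR (map (fun t => (1 - zf t) * / g t) l).
Proof. induction l as [|a l IH]; intros Hp; simpl; [lra|].
  assert (IH' := IH (fun t h => Hp t (or_intror h))).
  set (X := sumR (map (fun t => 1 - zf t) l)) in *.
  set (A := sumR (map (fun t => (1 - zf t) * g t) l)) in *.
  set (B := sumR (map (fun t => (1 - zf t) * / g t) l)) in *.
  assert (HX : 0 <= X) by (apply sumR_nonneg_in; intros t _; destruct (zf_01 t) as [H|H]; rewrite H; lra).
  assert (HA : 0 <= A) by (apply sumR_nonneg_in; intros t h; pose proof (Hp t (or_intror h)) as H7;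
    destruct (zf_01 t) as [H|H]; rewrite H; nra).
  assert (HB : 0 <= B) by (apply sumR_nonneg_in; intros t h; pose proof (Hp t (or_intror h)) as H7;
    pose proof (Rinv_0_lt_compat _ H7); destruct (zf_01 t) as [H1|H1]; rewrite H1; nra).
  pose proof (Hp a (or_introl eq_refl)) as Hga.
  destruct (zf_01 a) as [H|H]; rewrite H.
  - replace (1-0) with 1 by ring.
    set (w := g a) in *. assert (Hw : w * / w = 1) by (field; lra).
    assert (Hiw : 0 < / w) by (apply Rinv_0_lt_compat; lra).
    set (iw := / w) in *.
    assert (H2 : 2 * X <= A * iw + w * B).
    { assert (0 <= A * iw) by nra. assert (0 <= w * B) by nra.
      assert (Hpq : (A*iw) * (w*B) = A * B) by (transitivity (A*B*(w*iw)); [ring| rewrite Hw; ring]).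
      set (p := A*iw) in *. set (q := w*B) in *.
      assert (Hsq : (2*X)^2 <= (p+q)^2).
      { replace ((p+q)^2) with ((p-q)^2 + 4*(p*q)) by ring. rewrite Hpq.
        replace ((2*X)^2) with (4 * X^2) by ring. pose proof (pow2_ge_0 (p-q)). lra. }
      destruct (Rle_lt_dec (2*X) (p+q)) as [?|Hlt]; auto.
      exfalso. assert ((p+q)^2 < (2*X)^2) by nra. lra. }
    nra.
  - replace (1-1) with 0 by ring. nra.
Qed.

Lemma sum_decomp (Zk Nk mu : R) (g : nat -> R) l :
  sumR (map (fun t => (1 - zf t) * (Zk*(g t + / g t - 2) + (/ g t - g t) - Nk*mu*(1 - g (S t)/g t))) l)
  = Zk * (sumR (map (fun t => (1 - zf t) * g t) l) + sumR (map (fun t => (1 - zf t) * / g t) l)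
          - 2 * sumR (map (fun t => 1 - zf t) l))
    + (sumR (map (fun t => (1 - zf t) * / g t) l) - sumR (map (fun t => (1 - zf t) * g t) l))
    - Nk * mu * (sumR (map (fun t => 1 - zf t) l) - sumR (map (fun t => (1 - zf t) * (g (S t) / g t)) l)).
Proof. induction l; simpl; [ring| rewrite IHl; ring]. Qed.

Lemma split_A (g : nat -> R) l : g 0%nat = 1 ->
  sumR (map g l) = Zc l + sumR (map (fun t => (1 - zf t) * g t) l).
Proof. intros H; unfold Zc; induction l; simpl; [ring|]. rewrite IHl.
  unfold zf; destruct a; simpl; [rewrite H|]; ring. Qed.

Lemma split_B (g : nat -> R) l : g 0%nat = 1 ->
  sumR (map (fun t => / g t) l) = Zc l + sumR (map (fun t => (1 - zf t) * / g t) l).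
Proof. intros H; unfold Zc; induction l; simpl; [ring|]. rewrite IHl.
  unfold zf; destruct a; simpl; [rewrite H, Rinv_1|]; ring. Qed.

Lemma split_N l : INR (length l) = Zc l + sumR (map (fun t => 1 - zf t) l).
Proof. unfold Zc; induction l; [simpl; ring|]. cbn [length map]. rewrite S_INR, IHl.
  unfold sumR; cbn [fold_right]. ring. Qed.

Lemma E_ZF_ge N mu s (g : nat -> R) : (1 <= N)%nat -> 0 <= mu -> length s = N ->
  g 0%nat = 1 -> (forall t, In t s -> 0 < g t) ->
  0 < Zc s -> 0 < prodR (map g s) ->
  (forall t, In t s -> 0 <= (1 - zf t) * (Zc s*(g t + / g t - 2) + (/ g t - g t) - INR N*mu*(1 - g (S t)/g t))) ->
  Zc s * prodR (map g s) <= E N mu s (fun x => Zc x * prodR (map g x)).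
Proof. intros HN Hmu Hl Hg0 Hgp HZ HF Hel.
  pose proof (rate_pos N mu s HN Hmu Hl) as HR.
  rewrite E_ZF by auto.
  pose proof (sumR_nonneg_in _ _ Hel) as Hsum. rewrite sum_decomp in Hsum.
  pose proof (CS_list g s Hgp) as HCS.
  rewrite (split_A g s Hg0), (split_B g s Hg0).
  unfold total_rate in *. rewrite n_mutating_eq in *. rewrite Hl in *.
  pose proof (split_N s) as HNs. rewrite Hl in HNs.
  set (Z := Zc s) in *. set (F := prodR (map g s)) in *.
  set (A := sumR (map (fun t => (1 - zf t) * g t) s)) in *.
  set (B := sumR (map (fun t => (1 - zf t) * / g t) s)) in *.
  set (X := sumR (map (fun t => 1 - zf t) s)) in *.
  set (M := sumR (map (fun t => (1 - zf t) * (g (S t) / g t)) s)) in *.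
  assert (HNp : 0 < INR N) by (apply lt_0_INR; lia).
  set (n := INR N) in *.
  assert (Key : n * n + n * mu * X - n * mu * M <= (Z + A) * (Z + B) + (Z + B) - (Z + A)).
  { assert (Hnn : n*n = Z*Z + 2*Z*X + X*X) by (rewrite HNs; ring). lra. }
  assert (HZF : 0 < Z * F) by nra.
  replace (n - Z) with X in * by lra.
  set (R0 := n + mu * X) in *.
  apply Rle_trans with (/ n / R0 * (F * Z * (n * n + n * mu * X - n * mu * M)) + mu / R0 * (Z * F * M)).
  - assert (HX0 : 0 <= X) by (apply sumR_nonneg_in; intros t _; destruct (zf_01 t) as [H7|H7]; rewrite H7; lra).
    right. unfold R0. field. split; apply Rgt_not_eq; nra.
  - apply Rplus_le_compat_r. apply Rmult_le_compat_l.
    + apply Rmult_le_pos; left; apply Rinv_0_lt_compat; auto.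
    + apply Rmult_le_compat_l; [nra| exact Key].
Qed.


Definition ex (m t : nat) : R := 1 - / 2 ^ (m - t).
Definition wf (m : nat) (r : R) (t : nat) : R :=
  if Nat.eqb t 0 then 1 else 1 - Rpower r (ex m t).
Definition Ff m r s := prodR (map (wf m r) s).
Definition hh N s := Zc s / INR N.
Definition P2v N m r a s := hh N s * (1 - Ff m r s) + a * (INR N - Zc s) / INR N.
Definition Vf N m r a s (f : bool) := if f then hh N s else Rmin (hh N s) (P2v N m r a s).

Lemma Rpower_pos x y : 0 < Rpower x y.
Proof. unfold Rpower; apply exp_pos. Qed.

Lemma Rpower_1_base y : Rpower 1 y = 1.
Proof. unfold Rpower. rewrite ln_1, Rmult_0_r, exp_0. reflexivity. Qed.

Lemma ex_bounds m t : 0 <= ex m t < 1.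
Proof. unfold ex. pose proof (pow_R1_Rle 2 (m - t) ltac:(lra)).
  assert (0 < / 2 ^ (m - t)) by (apply Rinv_0_lt_compat; lra).
  assert (/ 2 ^ (m - t) <= 1).
  { rewrite <- Rinv_1. apply Rinv_le_contravar; lra. }
  lra. Qed.

Lemma Rpower_le1 r e : 0 < r <= 1 -> 0 <= e -> Rpower r e <= 1.
Proof. intros Hr He. rewrite <- (Rpower_1_base e). apply Rle_Rpower_l; lra. Qed.

Lemma wf_bounds m r t : 0 < r <= 1 -> 0 <= wf m r t <= 1.
Proof. intros Hr. unfold wf. destruct (Nat.eqb t 0); [lra|].
  pose proof (Rpower_pos r (ex m t)). pose proof (Rpower_le1 r (ex m t) Hr (proj1 (ex_bounds m t))). lra. Qed.

Lemma wf_0 m r : wf m r 0%nat = 1.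
Proof. reflexivity. Qed.

Lemma prodR_bounds (g : nat -> R) l : (forall t, 0 <= g t <= 1) -> 0 <= prodR (map g l) <= 1.
Proof. intros H; induction l; simpl; [lra|]. pose proof (H a). nra. Qed.

Lemma prod_pos_each (g : nat -> R) l : (forall t, 0 <= g t) -> 0 < prodR (map g l) ->
  forall t, In t l -> 0 < g t.
Proof. intros H; induction l; simpl; intros Hp t Ht; [contradiction|].
  assert (0 <= prodR (map g l)).
  { clear -H. induction l; simpl; [lra|]. pose proof (H a). nra. }
  pose proof (H a). destruct Ht as [<-|Ht].
  - destruct (Req_dec (g a) 0) as [E|E]; [rewrite E in Hp; lra| lra].
  - apply IHl; auto. destruct (Req_dec (prodR (map g l)) 0) as [E|E]; [rewrite E in Hp; lra| lra]. Qed.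

Lemma has_type_F m r s : (1 <= m)%nat -> 0 < r -> has_type m s = true -> Ff m r s = 0.
Proof. intros Hm Hr. unfold has_type, Ff. induction s; simpl; [discriminate|].
  intros H. apply orb_true_iff in H. destruct H as [H|H].
  - apply Nat.eqb_eq in H. subst a. unfold wf at 1.
    destruct (Nat.eqb m 0) eqn:E; [apply Nat.eqb_eq in E; lia|].
    unfold ex. rewrite Nat.sub_diag. simpl. replace (1 - / 1) with 0 by (rewrite Rinv_1; ring).
    rewrite Rpower_O by auto. ring.
  - rewrite IHs by auto. ring. Qed.

Lemma u_square m r t : 0 < r -> (t < m)%nat ->
  Rpower r (ex m t) * Rpower r (ex m t) = r * Rpower r (ex m (S t)).
Proof. intros Hr Ht. rewrite <- Rpower_plus.
  transitivity (Rpower r 1 * Rpower r (ex m (S t))); [|rewrite Rpower_1; auto].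
  rewrite <- Rpower_plus. f_equal.
  unfold ex. replace (m - t)%nat with (S (m - S t)) by lia. simpl.
  pose proof (pow_R1_Rle 2 (m - S t) ltac:(lra)). field. lra. Qed.

Lemma per_element m r N mu Z t : 0 < r <= 1 -> (1 <= m)%nat -> 0 <= mu -> 0 <= Z ->
  INR N * mu <= Z * r -> 0 < wf m r t ->
  0 <= (1 - zf t) * (Z*(wf m r t + / wf m r t - 2) + (/ wf m r t - wf m r t)
        - INR N*mu*(1 - wf m r (S t)/wf m r t)).
Proof. intros Hr Hm Hmu HZ HZr Hw.
  destruct t as [|t].
  - unfold zf; simpl. lra.
  - replace (zf (S t)) with 0 by reflexivity. rewrite Rminus_0_r, Rmult_1_l.
    assert (Htm : (S t < m)%nat).
    { destruct (Nat.lt_ge_cases (S t) m) as [H|H]; auto. exfalso.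
      unfold wf, ex in Hw; simpl in Hw. replace (m - S t)%nat with 0%nat in Hw by lia.
      simpl in Hw. rewrite Rinv_1, Rminus_diag, Rpower_O in Hw by lra. lra. }
    pose proof (u_square m r (S t) (proj1 Hr) Htm) as Hsq.
    pose proof (wf_bounds m r (S t) Hr) as Hwb.
    unfold wf in *. simpl in *.
    set (u := Rpower r (ex m (S t))) in *. set (u' := Rpower r (ex m (S (S t)))) in *.
    assert (Hu : 0 <= u) by (left; apply Rpower_pos).
    assert (Hu' : 0 <= u') by (left; apply Rpower_pos).
    set (w := 1 - u) in *.
    assert (Hexp : Z * (w + / w - 2) + (/ w - w) - INR N * mu * (1 - (1 - u') / w)
       = (Z * (u * u) + (1 - w * w) - INR N * mu * (u' - u)) / w).
    { unfold w. field. unfold w in Hw. lra. }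
    rewrite Hexp. apply Rmult_le_pos; [| left; apply Rinv_0_lt_compat; auto].
    rewrite Hsq.
    assert (INR N * mu * u' <= Z * r * u') by (apply Rmult_le_compat_r; auto).
    assert (0 <= INR N * mu * u) by (apply Rmult_le_pos; [apply Rmult_le_pos; [apply pos_INR|]|]; auto).
    assert (0 <= 1 - w*w) by nra.
    nra.
Qed.


Lemma E_ext N mu s G1 G2 : (forall x, G1 x = G2 x) -> E N mu s G1 = E N mu s G2.
Proof. intros H. unfold E. apply sumR_ext_in. intros; rewrite H; auto. Qed.

Lemma E_lin N mu s G1 G2 G3 a b c :
  E N mu s (fun x => a * G1 x + b * G2 x + c * G3 x)
  = a * E N mu s G1 + b * E N mu s G2 + c * E N mu s G3.
Proof. unfold E. induction (transitions N mu s); simpl; [ring| rewrite IHl; ring]. Qed.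

Lemma E_mono N mu s G1 G2 : (1 <= N)%nat -> 0 <= mu -> length s = N ->
  (forall x, length x = N -> G1 x <= G2 x) -> E N mu s G1 <= E N mu s G2.
Proof. intros HN Hmu Hl H. pose proof (rate_pos N mu s HN Hmu Hl) as HR.
  assert (HNp : 0 < INR N) by (apply lt_0_INR; lia).
  rewrite !E_expand. apply Rplus_le_compat.
  - apply Rmult_le_compat_l.
    + apply Rmult_le_pos; left; apply Rinv_0_lt_compat; auto.
    + apply sumR_le_in. intros i Hi. apply in_seq in Hi. apply sumR_le_in. intros j _.
      apply H. rewrite set_at_length; lia.
  - apply Rmult_le_compat_l.
    + unfold Rdiv. apply Rmult_le_pos; [auto| left; apply Rinv_0_lt_compat; auto].
    + apply sumR_le_in. intros i Hi. apply in_seq in Hi.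
      apply Rmult_le_compat_l.
      * destruct (zf_01 (nth i s 0%nat)) as [H0|H0]; rewrite H0; lra.
      * apply H. rewrite set_at_length; lia.
Qed.

Lemma all_zero_Zc s : all_zero s = true -> Zc s = INR (length s).
Proof. unfold all_zero, Zc. induction s; [reflexivity|]. cbn [forallb map length].
  intros H. apply andb_true_iff in H. destruct H as [H1 H2]. apply Nat.eqb_eq in H1. subst a.
  rewrite S_INR, <- IHs by auto. unfold sumR; cbn [fold_right]. unfold zf; simpl. ring. Qed.


Lemma hh_bounds N s : (1 <= N)%nat -> length s = N -> 0 <= hh N s <= 1.
Proof. intros HN Hl. unfold hh. pose proof (Zc_bounds s) as H. rewrite Hl in H.
  assert (0 < INR N) by (apply lt_0_INR; lia).
  split; [apply Rmult_le_pos; [lra| left; apply Rinv_0_lt_compat; lra]|].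
  apply (Rmult_le_reg_r (INR N)); auto. unfold Rdiv. rewrite Rmult_assoc, Rinv_l by lra. lra. Qed.

Lemma Vf_nonneg N m r a s f : (1 <= N)%nat -> 0 < r <= 1 -> 0 <= a -> length s = N -> 0 <= Vf N m r a s f.
Proof. intros HN Hr Ha Hl. pose proof (hh_bounds N s HN Hl).
  pose proof (prodR_bounds (wf m r) s (fun t => wf_bounds m r t Hr)) as HF.
  pose proof (Zc_bounds s) as HZ. rewrite Hl in HZ.
  assert (0 < INR N) by (apply lt_0_INR; lia).
  unfold Vf, P2v, Ff. destruct f; [lra|]. apply Rmin_glb; [lra|].
  apply Rplus_le_le_0_compat; [nra|]. unfold Rdiv. apply Rmult_le_pos; [nra| left; apply Rinv_0_lt_compat; lra]. Qed.

Lemma P2v_alt N m r a s : (1 <= N)%nat ->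
  P2v N m r a s = (1 - a) * hh N s + a * 1 - / INR N * (Zc s * Ff m r s).
Proof. intros HN. assert (0 < INR N) by (apply lt_0_INR; lia).
  unfold P2v, hh. field. lra. Qed.

Lemma main_step N m mu a r n :
  (1 <= N)%nat -> (1 <= m)%nat -> 0 < mu -> 0 < a <= 1 -> r = 2 * mu / a -> r <= 1 ->
  forall s f, length s = N -> p N mu m n s f <= Vf N m r a s f.
Proof. intros HN Hm Hmu Ha Hr Hr1.
  assert (Hr0 : 0 < r) by (rewrite Hr; unfold Rdiv; apply Rmult_lt_0_compat; [lra| apply Rinv_0_lt_compat; lra]).
  assert (Hrr : 0 < r <= 1) by lra.
  assert (HNp : 0 < INR N) by (apply lt_0_INR; lia).
  induction n as [|n IH]; intros s f Hl.
  - simpl. destruct (f && all_zero s) eqn:E.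
    + apply andb_true_iff in E. destruct E as [-> Ez]. simpl. unfold hh.
      rewrite all_zero_Zc, Hl by auto. right. field. lra.
    + apply Vf_nonneg; auto; lra.
  - simpl. destruct (all_zero s) eqn:Ez.
    + destruct f.
      * simpl. unfold hh. rewrite all_zero_Zc, Hl by auto. right. field. lra.
      * apply Vf_nonneg; auto; lra.
    + change (sumR (map (fun ts => fst ts * p N mu m n (snd ts) (f || has_type m (snd ts))) (transitions N mu s)))
        with (E N mu s (fun x => p N mu m n x (f || has_type m x))).
      apply Rle_trans with (E N mu s (fun x => Vf N m r a x (f || has_type m x))).
      { apply E_mono; auto; lra. }
      assert (Hhh : E N mu s (hh N) = hh N s).
      { unfold hh. transitivity (E N mu s (fun x => / INR N * Zc x + 0 * Zc x + 0 * Zc x)).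
        - apply E_ext; intros; unfold Rdiv; ring.
        - rewrite E_lin, E_Zc by (auto; lra). unfold Rdiv; ring. }
      assert (HVh : E N mu s (fun x => Vf N m r a x (f || has_type m x)) <= hh N s).
      { rewrite <- Hhh. apply E_mono; auto; try lra. intros x _. unfold Vf.
        destruct (f || has_type m x); [lra| apply Rmin_l]. }
      destruct f.
      * exact HVh.
      * simpl orb. unfold Vf at 2.
        destruct (Rle_lt_dec (hh N s) (P2v N m r a s)) as [Hle|Hlt].
        { rewrite Rmin_left by auto. exact HVh. }
        rewrite Rmin_right by lra.
        apply Rle_trans with (E N mu s (P2v N m r a)).
        { apply E_mono; auto; try lra. intros x Hx. unfold Vf.
          destruct (has_type m x) eqn:Ht; [|apply Rmin_r].
          unfold P2v. rewrite has_type_F by auto.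
          pose proof (Zc_bounds x) as HZ. rewrite Hx in HZ.
          assert (0 <= a * (INR N - Zc x) / INR N).
          { unfold Rdiv. apply Rmult_le_pos; [nra| left; apply Rinv_0_lt_compat; lra]. }
          lra. }
        pose proof (prodR_bounds (wf m r) s (fun t => wf_bounds m r t Hrr)) as HF.
        pose proof (Zc_bounds s) as HZ. rewrite Hl in HZ.
        fold (Ff m r s) in HF.
        assert (Hcond : a * (INR N - Zc s) < Zc s * Ff m r s).
        { unfold P2v, hh in Hlt.
          apply (Rmult_lt_compat_r (INR N)) in Hlt; auto.
          replace ((Zc s / INR N * (1 - Ff m r s) + a * (INR N - Zc s) / INR N) * INR N)
            with (Zc s - Zc s * Ff m r s + a * (INR N - Zc s)) in Hlt by (field; lra).
          replace (Zc s / INR N * INR N) with (Zc s) in Hlt by (field; lra). lra. }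
        assert (HZpos : 0 < Zc s) by nra.
        assert (HFpos : 0 < Ff m r s) by nra.
        assert (HZr : INR N * mu <= Zc s * r).
        { rewrite Hr. assert (a * INR N < 2 * Zc s) by nra.
          apply (Rmult_le_reg_r a); [lra|]. unfold Rdiv.
          replace (Zc s * (2 * mu * / a) * a) with (2 * Zc s * mu) by (field; lra). nra. }
        assert (Hwpos : forall t, In t s -> 0 < wf m r t).
        { apply prod_pos_each; [intros t; apply (wf_bounds m r t Hrr)| exact HFpos]. }
        pose proof (E_ZF_ge N mu s (wf m r) HN (Rlt_le _ _ Hmu) Hl (wf_0 m r) Hwpos HZpos HFpos
           (fun t Ht => per_element m r N mu (Zc s) t Hrr Hm (Rlt_le _ _ Hmu) (Rlt_le _ _ HZpos) HZr (Hwpos t Ht)))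
          as HE.
        fold (Ff m r s) in HE.
        rewrite (E_ext N mu s (P2v N m r a) (fun x => (1 - a) * hh N x + a * 1 + (- / INR N) * (Zc x * Ff m r x)))
          by (intros; rewrite P2v_alt by auto; ring).
        rewrite E_lin, Hhh, E_one by (auto; lra).
        rewrite P2v_alt by auto.
        unfold Ff in HE |- *.
        assert (0 < / INR N) by (apply Rinv_0_lt_compat; lra).
        nra.
Qed.


Lemma cv_const c : Un_cv (fun _ => c) c.
Proof. intros eps He. exists 0%nat. intros. unfold Rdist. rewrite Rminus_diag, Rabs_R0. auto. Qed.

Lemma E_zero N mu s : E N mu s (fun _ => 0) = 0.
Proof. unfold E. induction (transitions N mu s); simpl; [ring| rewrite IHl; ring]. Qed.

Lemma p_nonneg N mu m n : (1 <= N)%nat -> 0 <= mu ->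
  forall s f, length s = N -> 0 <= p N mu m n s f.
Proof. intros HN Hmu. induction n; intros s f Hl; simpl.
  - destruct (f && all_zero s); lra.
  - destruct (all_zero s); [destruct f; lra|].
    change (0 <= E N mu s (fun x => p N mu m n x (f || has_type m x))).
    rewrite <- (E_zero N mu s). apply E_mono; auto. Qed.

Lemma p_mono N mu m n : (1 <= N)%nat -> 0 <= mu ->
  forall s f, length s = N -> p N mu m n s f <= p N mu m (S n) s f.
Proof. intros HN Hmu. induction n; intros s f Hl.
  - simpl. destruct (all_zero s) eqn:Ez.
    + destruct f; simpl; lra.
    + rewrite andb_false_r.
      change (0 <= E N mu s (fun x => p N mu m 0 x (f || has_type m x))).
      rewrite <- (E_zero N mu s). apply E_mono; auto. intros x Hx. apply (p_nonneg N mu m 0); auto.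
  - change (p N mu m (S n) s f) with
      (if all_zero s then (if f then 1 else 0)
       else E N mu s (fun x => p N mu m n x (f || has_type m x))).
    change (p N mu m (S (S n)) s f) with
      (if all_zero s then (if f then 1 else 0)
       else E N mu s (fun x => p N mu m (S n) x (f || has_type m x))).
    destruct (all_zero s); [lra|]. apply E_mono; auto. Qed.

Lemma init_length N : (1 <= N)%nat -> length (init_config N) = N.
Proof. intros. unfold init_config. simpl. rewrite repeat_length. lia. Qed.

Lemma has_type_init m N : (2 <= m)%nat -> has_type m (init_config N) = false.
Proof. intros Hm. unfold has_type, init_config. simpl.
  destruct (Nat.eqb m 1) eqn:E; [apply Nat.eqb_eq in E; lia|]. simpl.
  induction (N - 1)%nat; simpl; auto. destruct (Nat.eqb m 0) eqn:E2; [apply Nat.eqb_eq in E2; lia|]. auto. Qed.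

Lemma Zc_repeat k : Zc (repeat 0%nat k) = INR k.
Proof. unfold Zc. induction k; [reflexivity|]. cbn [repeat map]. rewrite S_INR.
  unfold sumR in *; cbn [fold_right]. rewrite IHk. unfold zf; simpl. ring. Qed.

Lemma prod_repeat m r k : prodR (map (wf m r) (repeat 0%nat k)) = 1.
Proof. induction k; simpl; [reflexivity|]. rewrite IHk. unfold wf; simpl. ring. Qed.

Lemma P2v_init N m r a : (1 <= N)%nat ->
  INR N * P2v N m r a (init_config N) = (INR N - 1) * Rpower r (ex m 1) + a.
Proof. intros HN. assert (0 < INR N) by (apply lt_0_INR; lia).
  unfold P2v, hh, Ff, init_config. unfold Zc at 1 2. cbn [map]. unfold sumR at 1 2. cbn [fold_right].
  fold (sumR (map zf (repeat 0%nat (N - 1)))). fold (Zc (repeat 0%nat (N-1))).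
  rewrite Zc_repeat. unfold prodR; cbn [fold_right]. fold (prodR (map (wf m r) (repeat 0%nat (N - 1)))).
  rewrite prod_repeat. rewrite minus_INR by lia. unfold zf, wf; simpl. field. lra. Qed.

Lemma qprime_bound N mu m a r : (1 <= N)%nat -> (2 <= m)%nat -> 0 < mu -> 0 < a <= 1 ->
  r = 2 * mu / a -> r <= 1 ->
  0 <= qprime N mu m /\ INR N * qprime N mu m <= (INR N - 1) * Rpower r (ex m 1) + a.
Proof. intros HN Hm Hmu Ha Hr Hr1.
  set (u := fun n => p N mu m n (init_config N) (has_type m (init_config N))).
  pose proof (init_length N HN) as Hl.
  assert (Hub : forall n, u n <= P2v N m r a (init_config N)).
  { intros n. unfold u. rewrite has_type_init by auto.
    eapply Rle_trans; [apply (main_step N m mu a r n); auto; lia|]. unfold Vf. apply Rmin_r. }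
  assert (Hlb : forall n, 0 <= u n) by (intros; apply p_nonneg; auto; lra).
  assert (Hgr : Un_growing u) by (intros n; apply p_mono; auto; lra).
  destruct (growing_cv u Hgr) as [l Hl'].
  { exists (P2v N m r a (init_config N)). intros x [n ->]. apply Hub. }
  assert (Hq : Un_cv u (qprime N mu m)).
  { unfold qprime. apply (epsilon_spec (inhabits 0) (fun q => Un_cv u q)). exists l; exact Hl'. }
  split.
  - apply Rle_cv_lim with (Un := fun _ => 0) (Vn := u); auto. apply cv_const.
  - assert (qprime N mu m <= P2v N m r a (init_config N)).
    { apply Rle_cv_lim with (Un := u) (Vn := fun _ => P2v N m r a (init_config N)); auto. apply cv_const. }
    rewrite <- P2v_init by auto. apply Rmult_le_compat_l; [apply pos_INR| auto]. Qed.


Lemma c_bounds m : (2 <= m)%nat -> 1/2 <= ex m 1 < 1.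
Proof. intros Hm. unfold ex. replace (m - 1)%nat with (S (m - 2)) by lia. simpl.
  pose proof (pow_R1_Rle 2 (m - 2) ltac:(lra)).
  assert (0 < / (2 * 2 ^ (m - 2))) by (apply Rinv_0_lt_compat; lra).
  assert (/ (2 * 2 ^ (m - 2)) <= / 2) by (apply Rinv_le_contravar; lra).
  lra. Qed.

Lemma at_N N m mu : (1 <= N)%nat -> (2 <= m)%nat -> 0 < mu ->
  INR N * Rpower mu (ex m 1) <= 1/4 ->
  0 <= INR N * qprime N mu m <= 3 * sqrt (INR N * Rpower mu (ex m 1)).
Proof. intros HN Hm Hmu Heps.
  pose proof (c_bounds m Hm) as Hc. set (c := ex m 1) in *.
  assert (HNp : 0 < INR N) by (apply lt_0_INR; lia).
  set (eps := INR N * Rpower mu c) in *.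
  assert (He0 : 0 < eps) by (apply Rmult_lt_0_compat; auto; apply Rpower_pos).
  set (a := sqrt eps).
  assert (Ha0 : 0 < a) by (apply sqrt_lt_R0; auto).
  assert (Haa : a * a = eps) by (apply sqrt_sqrt; lra).
  assert (Ha1 : a <= 1/2) by nra.
  set (r := 2 * mu / a).
  assert (Hr : r = (2 / a) * mu) by (unfold r; field; lra).
  assert (H2a : 1 <= 2 / a).
  { apply (Rmult_le_reg_r a); auto. unfold Rdiv. rewrite Rmult_assoc, Rinv_l by lra. lra. }
  assert (Hrc : Rpower r c <= (2 / a) * Rpower mu c).
  { rewrite Hr, <- Rpower_mult_distr by lra. apply Rmult_le_compat_r; [left; apply Rpower_pos|].
    rewrite <- (Rpower_1 (2/a)) at 2 by lra. apply Rle_Rpower; lra. }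
  assert (HNrc : INR N * Rpower r c <= 2 * a).
  { apply Rle_trans with (INR N * ((2 / a) * Rpower mu c)); [apply Rmult_le_compat_l; lra|].
    replace (INR N * (2 / a * Rpower mu c)) with (2 * eps / a) by (unfold eps; field; lra).
    rewrite <- Haa. right. field. lra. }
  assert (Hr1 : r <= 1).
  { destruct (Rle_lt_dec r 1) as [?|Hlt]; auto. exfalso.
    assert (Hrp : 1 < Rpower r c).
    { rewrite <- (Rpower_1_base c). apply Rlt_Rpower_l; lra. }
    assert (INR N * 1 <= INR N * Rpower r c) by (apply Rmult_le_compat_l; lra).
    assert (1 <= INR N) by (apply (le_INR 1); lia). nra. }
  destruct (qprime_bound N mu m a r HN Hm Hmu ltac:(lra) eq_refl Hr1) as [Hq0 Hq].
  split; [apply Rmult_le_pos; lra|].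
  assert (0 < Rpower r c) by apply Rpower_pos.
  fold c in Hq. nra. Qed.

Theorem mainTheorem5 (m : nat) (mu : nat -> R) :
  (2 <= m)%nat ->
  (forall N : nat, 0 < mu N) ->
  Un_cv (fun N => INR N * Rpower (mu N) (1 - / 2 ^ (m - 1))) 0 ->
  Un_cv (fun N => INR N * qprime N (mu N) m) 0.
Proof. intros Hm Hmu Hcv eps He.
  set (d := Rmin (1/4) ((eps/3) * (eps/3))).
  assert (Hd : 0 < d) by (apply Rmin_glb_lt; nra).
  destruct (Hcv d Hd) as [N0 HN0].
  exists (max N0 1). intros N HNge.
  assert (HN1 : (1 <= N)%nat) by lia.
  specialize (HN0 N ltac:(lia)). unfold Rdist in *. rewrite Rminus_0_r in *.
  change (1 - / 2 ^ (m - 1)) with (ex m 1) in HN0.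
  assert (Hpos : 0 <= INR N * Rpower (mu N) (ex m 1))
    by (apply Rmult_le_pos; [apply pos_INR| left; apply Rpower_pos]).
  rewrite Rabs_right in HN0 by lra.
  assert (Hd1 : d <= 1/4) by apply Rmin_l. assert (Hd2 : d <= (eps/3)*(eps/3)) by apply Rmin_r.
  destruct (at_N N m (mu N) HN1 Hm (Hmu N) ltac:(lra)) as [H0 H1].
  rewrite Rabs_right by lra.
  set (e := INR N * Rpower (mu N) (ex m 1)) in *.
  assert (sqrt e < eps / 3).
  { assert (Hs : sqrt e * sqrt e = e) by (apply sqrt_sqrt; lra).
    pose proof (sqrt_pos e). nra. }
  lra. Qed.
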